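(* Let $A$ be a commutative ring, $E$ a non-zero $A$-module and $R=A\propto E$ the trivial ring extension of $A$ by $E$. Then $R$ is Gaussian if and only if $A$ is Gaussian and $aE=a^2E$ for each $a\in A$.
   Context: All rings are commutative with identity. The trivial ring extension $R=A\propto E$ is the ring with underlying additive group $A\times E$ and multiplication $(a,e)(a',e')=(aa',ae'+a'e)$. For $f\in R[X]$, the content $c(f)$ is the ideal generated by the coefficients of $f$; $R$ is Gaussian if $c(fg)=c(f)c(g)$ for all $f,g\in R[X]$. *)

(* Defs.v *)
From HB Require Import structures.
From mathcomp Require Import all_boot all_order all_algebra.
Set Implicit Arguments. Unset Strict Implicit. Unset Printing Implicit Defensive.
Import GRing.Theory.
Local Open Scope ring_scope.

Section TrivExt.
Variables (A : comNzRingType) (E : lmodType A).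

Definition triv_ext : Type := (A * E)%type.
HB.instance Definition _ := Choice.on triv_ext.
HB.instance Definition _ := GRing.Zmodule.on triv_ext.

Definition te_one : triv_ext := (1, 0).
Definition te_mul (x y : triv_ext) : triv_ext :=
  (x.1 * y.1, x.1 *: y.2 + y.1 *: x.2).

Lemma te_mulA : associative te_mul.
Proof.
move=> [a e] [b f] [c g]; rewrite /te_mul /=; congr (_, _); first by rewrite mulrA.
by rewrite !scalerDr !scalerA [c * a]mulrC [c * b]mulrC !addrA.
Qed.

Lemma te_mulC : commutative te_mul.
Proof. by move=> [a e] [b f]; rewrite /te_mul /= mulrC addrC. Qed.

Lemma te_mul1 : left_id te_one te_mul.
Proof. by move=> [a e]; rewrite /te_mul /= mul1r scale1r scaler0 addr0. Qed.

Lemma te_mulDl : left_distributive te_mul +%R.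
Proof.
move=> [a e] [b f] [c g]; rewrite /te_mul /=; congr (_, _); first by rewrite mulrDl.
rewrite scalerDl scalerDr -!addrA; congr (_ + _).
by rewrite addrC -!addrA; congr (_ + _); rewrite addrC.
Qed.

Lemma te_one_neq0 : te_one != 0.
Proof. by apply/negP => /eqP [] /eqP; rewrite oner_eq0. Qed.

HB.instance Definition _ := GRing.Zmodule_isComNzRing.Build triv_ext
  te_mulA te_mulC te_mul1 te_mulDl te_one_neq0.

End TrivExt.
Arguments triv_ext : clear implicits.


Section Gaussian.
Variable R : comNzRingType.

Definition in_ideal_gen (s : seq R) (x : R) : Prop :=
  exists r : 'I_(size s) -> R, x = \sum_(i < size s) r i * s`_i.

Definition content (f : {poly R}) : R -> Prop := in_ideal_gen (polyseq f).

Definition ideal_mul (I J : R -> Prop) (x : R) : Prop :=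
  exists n (a b : 'I_n -> R),
    (forall i, I (a i) /\ J (b i)) /\ x = \sum_(i < n) a i * b i.

Definition gaussian : Prop :=
  forall f g : {poly R}, forall x : R,
    content (f * g) x <-> ideal_mul (content f) (content g) x.
End Gaussian.

(* Main.v *)
Require Import Defs.
From HB Require Import structures.
From mathcomp Require Import all_boot all_order all_algebra.
From mathcomp Require Import ring zify.
From mathcomp Require Import boolp classical_sets.
Set Implicit Arguments. Unset Strict Implicit. Unset Printing Implicit Defensive.
Import GRing.Theory.
Local Open Scope ring_scope.

Section LG.
Variable A : comNzRingType.

Definition idl (J : A -> Prop) :=
  [/\ J 0, (forall x y, J x -> J y -> J (x + y)) & (forall x y, J y -> J (x * y))].

Lemma local_global (L : A -> Prop) : idl L ->
  (forall P : A -> Prop, (forall x y, P x -> P y -> P (x + y)) ->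
     (forall x y, P y -> P (x * y)) -> ~ P 1 ->
     (forall x y, P (x * y) -> P x \/ P y) -> exists s, ~ P s /\ L s) ->
  L 1.
Proof.
move=> [L0 LD LM] H; case: (EM (L 1)) => // nL1; exfalso.
pose Q := fun J : set A => J = set0 \/ (idl J /\ (forall x, L x -> J x) /\ ~ J 1).
have [M [QM Mmax]] : exists M, Q M /\ forall B, (M `<` B)%classic -> ~ Q B.
  apply: Zorn_bigcup => F FQ Ftot.
  case: (EM (exists X, F X /\ X <> set0)) => [[X0 [FX0 X0n]]|hall]; last first.
    left; apply/seteqP; split => // x [X FX Xx]; apply: hall; exists X; split => //.
    by move=> X0; rewrite X0 in Xx.
  have Xi : forall X, F X -> X <> set0 -> idl X /\ (forall x, L x -> X x) /\ ~ X 1.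
    by move=> X FX Xn; case: (FQ X FX).
  have [[X00 _ _] [LX0 _]] := Xi X0 FX0 X0n.
  right; split; last split.
  - split.
    + by exists X0.
    + move=> x y [X FX Xx] [Y FY Yy].
      have XnX : X <> set0 by move=> e; rewrite e in Xx.
      have YnY : Y <> set0 by move=> e; rewrite e in Yy.
      case: (Ftot X Y FX FY) => [XY|YX].
        have [[_ YD _] _] := Xi Y FY YnY.
        by exists Y => //; apply: YD => //; apply: XY.
      have [[_ XD _] _] := Xi X FX XnX.
      by exists X => //; apply: XD => //; apply: YX.
    + move=> x y [X FX Xy]; have XnX : X <> set0 by move=> e; rewrite e in Xy.
      have [[_ _ XM] _] := Xi X FX XnX.
      by exists X => //; apply: XM.
  - by move=> x Lx; exists X0 => //; apply: LX0.
  - move=> [X FX X1]; have XnX : X <> set0 by move=> e; rewrite e in X1.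
    by have [_ [_ []]] := Xi X FX XnX.
case: QM => [Mset0|[[M0 MD MM] [LM' nM1]]].
  apply: (Mmax L); last by right; split.
  rewrite Mset0; split => //.
  by move=> /(_ 0 L0).
have [s [nMs Ls]] : exists s, ~ M s /\ L s.
  apply: H => //.
  move=> x y Mxy; case: (EM (M x)) => Mx; [by left|right].
  pose B := fun z => exists m r, M m /\ z = m + r * x.
  have QB : ~ Q B.
    apply: Mmax; split.
      by move=> z Mz; exists z, 0; split => //; rewrite mul0r addr0.
    by move=> /(_ x) BM; apply: Mx; apply: BM; exists 0, 1; split => //; rewrite mul1r add0r.
  case: (EM (B 1)) => [[m [r [Mm e1]]]|nB1].
    have -> : y = m * y + r * (x * y) by rewrite mulrA -mulrDl -e1 mul1r.
    by apply: MD; [rewrite mulrC|]; apply: MM.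
  exfalso; apply: QB; right; split; last split => //.
  - split.
    + by exists 0, 0; split => //; rewrite mul0r addr0.
    + move=> a b [m [r [Mm ->]]] [m' [r' [Mm' ->]]].
      by exists (m + m'), (r + r'); split; [apply: MD|rewrite mulrDl addrACA].
    + move=> a b [m [r [Mm ->]]]; exists (a * m), (a * r); split; first exact: MM.
      by rewrite mulrDr mulrA.
  - by move=> z Lz; exists z, 0; rewrite mul0r addr0; split => //; apply: LM'.
by apply: nMs; apply: LM'.
Qed.
End LG.


Section Content.
Variable R : comNzRingType.
Implicit Types p q : {poly R}.

Lemma sum_cut (F : nat -> R) n m :
  (forall i, (n <= i)%N -> F i = 0) -> (forall i, (m <= i)%N -> F i = 0) ->
  \sum_(i < m) F i = \sum_(i < n) F i.
Proof.
wlog nm : n m / (n <= m)%N.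
  move=> W Hn Hm; case: (leqP n m) => [nm|/ltnW mn]; first exact: W.
  by rewrite (W m n).
move=> Hn _; rewrite -(subnKC nm) big_split_ord /= [X in _ + X]big1 ?addr0 //.
by move=> i _; apply: Hn; rewrite leq_addr.
Qed.

Lemma contentP p x :
  content p x <-> exists r : nat -> R, x = \sum_(i < size p) r i * p`_i.
Proof.
split.
  case=> r ->; exists (fun i => if (i < size p)%N =P true is ReflectT H then r (Ordinal H) else 0).
  apply: eq_bigr => i _; case: eqP => H; last by rewrite ltn_ord in H.
  by have -> : Ordinal H = i by apply: val_inj.
by case=> r ->; exists (fun i => r i).
Qed.

Lemma content_sum p N (r : nat -> R) : content p (\sum_(i < N) r i * p`_i).
Proof.
apply/contentP; exists (fun i => if (i < N)%N then r i else 0); apply/esym.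
have -> : \sum_(i < N) r i * p`_i = \sum_(i < N) (if (i < N)%N then r i else 0) * p`_i.
  by apply: eq_bigr => i _; rewrite ltn_ord.
apply: (@sum_cut (fun i => (if (i < N)%N then r i else 0) * p`_i) N (size p)) => i Hi.
  by rewrite ltnNge Hi mul0r.
by rewrite nth_default // mulr0.
Qed.

Lemma content0 p : content p 0.
Proof. by apply/contentP; exists (fun=> 0); rewrite big1 // => i _; rewrite mul0r. Qed.

Lemma contentD p x y : content p x -> content p y -> content p (x + y).
Proof.
move=> /contentP[r ->] /contentP[r' ->]; rewrite -big_split /=.
by apply/contentP; exists (fun i => r i + r' i); apply: eq_bigr => i _; rewrite mulrDl.
Qed.

Lemma contentM p c x : content p x -> content p (c * x).
Proof.
move=> /contentP[r ->]; rewrite mulr_sumr.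
by apply/contentP; exists (fun i => c * r i); apply: eq_bigr => i _; rewrite mulrA.
Qed.

Lemma content_coef p i : content p p`_i.
Proof.
have -> : p`_i = \sum_(k < i.+1) (if (k : nat) == i then 1 else 0) * p`_k.
  rewrite big_ord_recr /= eqxx mul1r big1 ?add0r // => k _.
  by rewrite (ltn_eqF (ltn_ord k)) mul0r.
exact: (@content_sum p i.+1 (fun k => if k == i then 1 else 0)).
Qed.

Lemma content_big p n (F : nat -> R) :
  (forall i, (i < n)%N -> content p (F i)) -> content p (\sum_(i < n) F i).
Proof.
elim: n => [|n IH] H; first by rewrite big_ord0; exact: content0.
rewrite big_ord_recr /=; apply: contentD; last exact: H.
by apply: IH => i Hi; apply: H; rewrite ltnS ltnW.
Qed.

Lemma imP (I J : R -> Prop) x :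
  ideal_mul I J x <-> exists n (a b : nat -> R),
    (forall i, (i < n)%N -> I (a i) /\ J (b i)) /\ x = \sum_(i < n) a i * b i.
Proof.
split.
  case=> n [a [b [H ->]]].
  exists n, (fun i => if (i < n)%N =P true is ReflectT H then a (Ordinal H) else 0),
            (fun i => if (i < n)%N =P true is ReflectT H then b (Ordinal H) else 0).
  split.
    move=> i Hi; case: eqP => H'; [exact: H | by rewrite Hi in H'].
  apply: eq_bigr => i _; case: eqP => H'; last by rewrite ltn_ord in H'.
  by have -> : Ordinal H' = i by apply: val_inj.
case=> n [a [b [H ->]]]; exists n, (fun i => a i), (fun i => b i); split => //.
by move=> i; apply: H.
Qed.

Lemma im_prod (I J : R -> Prop) a b : I a -> J b -> ideal_mul I J (a * b).
Proof.
move=> Ha Hb; apply/imP; exists 1%N, (fun=> a), (fun=> b); split.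
  by move=> i _.
by rewrite big_ord1.
Qed.

Lemma im_add (I J : R -> Prop) x y :
  ideal_mul I J x -> ideal_mul I J y -> ideal_mul I J (x + y).
Proof.
move=> /imP[n [a [b [H ->]]]] /imP[m [a' [b' [H' ->]]]].
apply/imP; exists (n + m)%N, (fun i => if (i < n)%N then a i else a' (i - n)%N),
                             (fun i => if (i < n)%N then b i else b' (i - n)%N).
split.
  move=> i Hi; case: ifP => Hin; first exact: H.
  by apply: H'; rewrite ltn_subLR // leqNgt Hin.
rewrite big_split_ord /=; congr (_ + _).
  by apply: eq_bigr => i _; rewrite ltn_ord.
apply: eq_bigr => i _; rewrite ltnNge leq_addr /=.
by rewrite addKn.
Qed.

Lemma im0 (I J : R -> Prop) : ideal_mul I J 0.
Proof. by exists 0%N, (fun=> 0), (fun=> 0); split => [[]|]; rewrite ?big_ord0. Qed.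

Lemma im_big (I J : R -> Prop) n (F : nat -> R) :
  (forall i, (i < n)%N -> ideal_mul I J (F i)) -> ideal_mul I J (\sum_(i < n) F i).
Proof.
elim: n => [|n IH] H; first by rewrite big_ord0; exact: im0.
rewrite big_ord_recr /=; apply: im_add; last exact: H.
by apply: IH => i Hi; apply: H; rewrite ltnS ltnW.
Qed.

Lemma content_mul_im p q x : content (p * q) x -> ideal_mul (content p) (content q) x.
Proof.
move=> /contentP[r ->]; apply: (big_ind (ideal_mul _ _)); [exact: im0|exact: im_add|move=> k _].
rewrite coefM mulr_sumr; apply: (big_ind (ideal_mul _ _)); [exact: im0|exact: im_add|move=> j _].
rewrite mulrA.
apply: im_prod; [apply: contentM; exact: content_coef | exact: content_coef].
Qed.

Lemma gauss_of_coef p q :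
  (forall i j, content (p * q) (p`_i * q`_j)) ->
  forall x, content (p * q) x <-> ideal_mul (content p) (content q) x.
Proof.
move=> H x; split; first exact: content_mul_im.
case=> n [a [b [Hab ->]]]; apply: (big_ind (content _)); [exact: content0|exact: contentD|move=> i _].
have [/contentP[r ->] /contentP[r' ->]] := Hab i.
rewrite mulr_suml; apply: (big_ind (content _)); [exact: content0|exact: contentD|move=> k _].
rewrite mulr_sumr; apply: (big_ind (content _)); [exact: content0|exact: contentD|move=> l _].
have -> : r k * p`_k * (r' l * q`_l) = (r k * r' l) * (p`_k * q`_l) by ring.
exact/contentM/H.
Qed.

End Content.


Section Lin.
Variable R : comNzRingType.

Lemma coef3 (c0 c1 c2 : R) i :
  (c0%:P + c1%:P * 'X + c2%:P * 'X^2)`_i =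
  if i == 0%N then c0 else if i == 1%N then c1 else if i == 2%N then c2 else 0.
Proof.
rewrite !coefD coefC coefCM coefCM coefX coefXn.
by case: i => [|[|[|i]]] /=; rewrite ?mulr0 ?mulr1 ?addr0 ?add0r.
Qed.

Lemma content3 (c0 c1 c2 : R) x :
  content (c0%:P + c1%:P * 'X + c2%:P * 'X^2) x ->
  exists r0 r1 r2, x = r0 * c0 + r1 * c1 + r2 * c2.
Proof.
move=> /contentP[r ->].
set h := (c0%:P + c1%:P * 'X + c2%:P * 'X^2).
rewrite (@sum_cut _ (fun i => r i * h`_i) 3 (size h)); last first.
- by move=> i Hi; rewrite nth_default // mulr0.
- by move=> i Hi; rewrite /h coef3; case: i Hi => [|[|[|i]]] //= _; rewrite mulr0.
exists (r 0%N), (r 1%N), (r 2%N).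
by rewrite !big_ord_recr big_ord0 /= /h !coef3 /= add0r.
Qed.

Lemma glin (HG : gaussian R) (a0 a1 b0 b1 x : R) :
  [\/ x = a0 * b0, x = a0 * b1, x = a1 * b0 | x = a1 * b1] ->
  exists r0 r1 r2, x = r0 * (a0 * b0) + r1 * (a0 * b1 + a1 * b0) + r2 * (a1 * b1).
Proof.
move=> Hx.
pose f := a0%:P + a1%:P * 'X : {poly R}.
pose g := b0%:P + b1%:P * 'X : {poly R}.
have cf : forall i, f`_i = if i == 0%N then a0 else if i == 1%N then a1 else 0.
  move=> i; rewrite /f coefD coefC coefCM coefX.
  by case: i => [|[|i]] /=; rewrite ?mulr0 ?mulr1 ?addr0 ?add0r.
have cg : forall i, g`_i = if i == 0%N then b0 else if i == 1%N then b1 else 0.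
  move=> i; rewrite /g coefD coefC coefCM coefX.
  by case: i => [|[|i]] /=; rewrite ?mulr0 ?mulr1 ?addr0 ?add0r.
have f0 : f`_0 = a0 by rewrite cf.
have f1 : f`_1 = a1 by rewrite cf.
have g0 : g`_0 = b0 by rewrite cg.
have g1 : g`_1 = b1 by rewrite cg.
have Hm : ideal_mul (content f) (content g) x.
  case: Hx => ->.
  - by rewrite -f0 -g0; apply: im_prod; apply: content_coef.
  - by rewrite -f0 -g1; apply: im_prod; apply: content_coef.
  - by rewrite -f1 -g0; apply: im_prod; apply: content_coef.
  - by rewrite -f1 -g1; apply: im_prod; apply: content_coef.
have /(HG f g x) := Hm.
have -> : f * g = (a0 * b0)%:P + (a0 * b1 + a1 * b0)%:P * 'X + (a1 * b1)%:P * 'X^2.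
  rewrite /f /g !polyCM polyCD; ring.
exact: content3.
Qed.

End Lin.


Section McCoy.
Variable S : comNzRingType.
Variable N : S -> Prop.
Hypothesis N0 : N 0.
Hypothesis ND : forall x y, N x -> N y -> N (x + y).
Hypothesis NM : forall x y, N y -> N (x * y).

Lemma NN x : N x -> N (- x).
Proof. by move=> h; rewrite -mulN1r; apply: NM. Qed.

Lemma mccoy (p : {poly S}) t :
  (forall x, N (p`_t * x) -> N x) ->
  forall q : {poly S}, (forall k, N ((p * q)`_k)) -> forall j, N (q`_j).
Proof.
move=> Hreg.
suff H : forall d (q : {poly S}), (forall k, (d <= k)%N -> N q`_k) ->
    (forall k, N ((p * q)`_k)) -> forall j, N (q`_j).
  by move=> q Hq; apply: (H (size q)) => // k Hk; rewrite nth_default.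
elim=> [|d IH] q Hd Hpq; first by move=> j; apply: Hd.
have C2 : forall m i, (size p <= i + m)%N -> forall j, N (p`_i * q`_j).
  elim=> [|m IHm] i Hi.
    by move=> j; rewrite addn0 in Hi; rewrite nth_default // mul0r.
  have Hl : forall l, (i < l)%N -> forall j, N (p`_l * q`_j).
    by move=> l Hl; apply: IHm; rewrite (leq_trans Hi) // -addSnnS leq_add2r.
  have Hid : N (p`_i * q`_d).
    have E : (p * q)`_(i + d) = p`_i * q`_d +
        \sum_(l < (i + d).+1 | l != inord i :> 'I_(i + d).+1) p`_l * q`_(i + d - l).
      rewrite coefM (bigD1 (inord i)) //= inordK ?ltnS ?leq_addr //.
      by rewrite addKn.
    have : N (\sum_(l < (i + d).+1 | l != inord i :> 'I_(i + d).+1) p`_l * q`_(i + d - l)).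
      apply: (big_ind N) => //= l Hli.
      have Hli' : (l : nat) != i.
        apply: contra Hli => /eqP E'; apply/eqP; apply: val_inj.
        by rewrite /= inordK ?E' // ltnS leq_addr.
      case: (ltngtP i l) => [il|li|il]; first exact: Hl.
        apply: NM; apply: Hd.
        by move: li; lia.
      by move/eqP: Hli'; case; apply: esym.
    move=> Hs.
    have -> : p`_i * q`_d = (p * q)`_(i + d) + - (\sum_(l < (i + d).+1 | l != inord i :> 'I_(i + d).+1) p`_l * q`_(i + d - l)).
      by rewrite E addrK.
    by apply: ND => //; apply: NN.
  pose q' := p`_i *: q.
  have Hq' : forall j, N (q'`_j).
    apply: IH.
      move=> k; rewrite leq_eqVlt => /orP[/eqP <-|Hk]; first by rewrite coefZ.
      by rewrite coefZ; apply: NM; apply: Hd.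
    by move=> k; rewrite /q' -scalerAr coefZ; apply: NM.
  by move=> j; have := Hq' j; rewrite coefZ.
have Hqd : N q`_d by apply: Hreg; apply: (C2 (size p)); rewrite leq_addl.
apply: IH => // k; rewrite leq_eqVlt => /orP[/eqP <-|Hk] //.
exact: Hd.
Qed.

End McCoy.


Section Local.
Variable A : comNzRingType.
Variable P : A -> Prop.
Hypothesis PD : forall x y, P x -> P y -> P (x + y).
Hypothesis PM : forall x y, P y -> P (x * y).
Hypothesis P1 : ~ P 1.
Hypothesis Pprime : forall x y, P (x * y) -> P x \/ P y.
Hypothesis HG : gaussian A.

Lemma nPM x y : ~ P x -> ~ P y -> ~ P (x * y).
Proof. by move=> Hx Hy /Pprime [] //. Qed.

Lemma PN x : P x -> P (- x).
Proof. by move=> Hx; rewrite -mulN1r; apply: PM. Qed.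

Lemma P1B x : P x -> ~ P (1 - x).
Proof. by move=> Hx H; apply: P1; rewrite -(subrK x 1); apply: PD. Qed.

Lemma PB x y : P x -> ~ P y -> ~ P (y - x).
Proof. by move=> Hx Hy H; apply: Hy; rewrite -(subrK x y); apply: PD. Qed.

(* b^2 is locally in (a^2) *)
Definition dvd2 (a b : A) := exists s, ~ P s /\ exists x, s * b ^+ 2 = x * a ^+ 2.

Lemma dvd2_refl a : dvd2 a a.
Proof. by exists 1; split => //; exists 1. Qed.

Lemma dvd2_trans a b c : dvd2 a b -> dvd2 b c -> dvd2 a c.
Proof.
move=> [s [Hs [x Hx]]] [s' [Hs' [x' Hx']]]; exists (s' * s); split; first exact: nPM.
exists (x' * x).
have -> : s' * s * c ^+ 2 = s * (s' * c ^+ 2) by ring.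
by rewrite Hx' mulrCA Hx mulrA.
Qed.

Lemma G1 (a b : A) : exists u v, a * b = u * a ^+ 2 + v * b ^+ 2.
Proof.
have [r0 [r1 [r2 H]]] := @glin _ HG a b a (- b) (b * a) (@Or43 _ _ _ _ erefl).
exists r0, (- r2); rewrite mulrC H; ring.
Qed.

Lemma sq0 (x y : A) : x ^+ 2 = 0 -> y ^+ 2 = 0 -> x * y = 0.
Proof. by move=> hx hy; have [u [v ->]] := G1 x y; rewrite hx hy !mulr0 addr0. Qed.

Lemma PW0 (a c xi : A) : a * c = 0 -> c ^+ 2 = xi * a ^+ 2 -> c ^+ 2 = 0.
Proof.
move=> hac hc.
have [r0 [r1 [r2 H]]] := @glin _ HG a c c (- (xi * a)) (c * c) (@Or43 _ _ _ _ erefl).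
rewrite expr2 H.
have -> : a * c = 0 by [].
have -> : a * - (xi * a) + c * c = 0 by rewrite -expr2 hc; ring.
have -> : c * - (xi * a) = - xi * (a * c) by ring.
rewrite hac.
by rewrite !mulr0 !addr0.
Qed.

Lemma PW (a b : A) : dvd2 a b ->
  exists s y c, [/\ ~ P s, s * b = y * a + c, a * c = 0 & c ^+ 2 = 0].
Proof.
move=> [s1 [Hs1 [x Hx]]].
have [al [be Hab]] := G1 a b.
pose y := s1 * al + be * x.
have Hy : s1 * (a * b) = y * a ^+ 2.
  have -> : s1 * (a * b) = s1 * al * a ^+ 2 + be * (s1 * b ^+ 2) by rewrite Hab; ring.
  by rewrite Hx /y; ring.
exists s1, y, (s1 * b - y * a); split => //.
- by rewrite addrC subrK.
- by rewrite mulrBr mulrCA Hy; ring.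
apply: (@PW0 a _ (s1 * x - y ^+ 2)).
  by rewrite mulrBr mulrCA Hy; ring.
have -> : (s1 * b - y * a) ^+ 2 = s1 * (s1 * b ^+ 2) - 2%:R * y * (s1 * (a * b)) + y ^+ 2 * a ^+ 2 by ring.
by rewrite Hx Hy; ring.
Qed.

Lemma caseV (a b u v : A) : P v -> a * b = u * a ^+ 2 + v * b ^+ 2 ->
  dvd2 b a \/ dvd2 a b.
Proof.
move=> Pv hab.
pose c := b - u * a.
have hac : a * c = v * b ^+ 2 by rewrite /c mulrBr hab; ring.
have [r0 [r1 [r2 E1]]] := @glin _ HG a c c a (a * a) (@Or42 _ _ _ _ erefl).
have [r0' [r1' [r2' E2]]] := @glin _ HG a c c a (c * c) (@Or43 _ _ _ _ erefl).
pose p := r0 + r2; pose q := r1; pose p' := r0' + r2'; pose q' := r1'.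
have D3 : a * c - v * b ^+ 2 = 0 by rewrite hac subrr.
have Z1 : a * a - (r0 * (a * c) + r1 * (a * a + c * c) + r2 * (c * a)) = 0.
  by apply/eqP; rewrite subr_eq0; apply/eqP.
have Z2 : c * c - (r0' * (a * c) + r1' * (a * a + c * c) + r2' * (c * a)) = 0.
  by apply/eqP; rewrite subr_eq0; apply/eqP.
have D1 : a ^+ 2 - (p * (v * b ^+ 2) + q * (a ^+ 2 + c ^+ 2)) = 0.
  have -> : a ^+ 2 - (p * (v * b ^+ 2) + q * (a ^+ 2 + c ^+ 2)) =
    (a * a - (r0 * (a * c) + r1 * (a * a + c * c) + r2 * (c * a))) + p * (a * c - v * b ^+ 2).
    by rewrite /p /q; ring.
  by rewrite Z1 D3; ring.
have D2 : c ^+ 2 - (p' * (v * b ^+ 2) + q' * (a ^+ 2 + c ^+ 2)) = 0.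
  have -> : c ^+ 2 - (p' * (v * b ^+ 2) + q' * (a ^+ 2 + c ^+ 2)) =
    (c * c - (r0' * (a * c) + r1' * (a * a + c * c) + r2' * (c * a))) + p' * (a * c - v * b ^+ 2).
    by rewrite /p' /q'; ring.
  by rewrite Z2 D3; ring.
case: (EM (P q)) => Pq.
  left; exists (1 - q * (1 - u ^+ 2)); split.
    by apply: P1B; rewrite mulrC; apply: PM.
  exists (p * v + q - 2%:R * q * u * v); apply/eqP; rewrite -subr_eq0; apply/eqP.
  have -> : (1 - q * (1 - u ^+ 2)) * a ^+ 2 - (p * v + q - 2%:R * q * u * v) * b ^+ 2 =
     (a ^+ 2 - (p * (v * b ^+ 2) + q * (a ^+ 2 + c ^+ 2))) - 2%:R * q * u * (a * c - v * b ^+ 2).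
    by rewrite /c; ring.
  by rewrite D1 D3; ring.
right; exists (q - v * (q * p' - q' * p + 2%:R * q * u)); split.
  by apply: PB => //; rewrite mulrC; apply: PM.
exists (q' + q * u ^+ 2); apply/eqP; rewrite -subr_eq0; apply/eqP.
have -> : (q - v * (q * p' - q' * p + 2%:R * q * u)) * b ^+ 2 - (q' + q * u ^+ 2) * a ^+ 2 =
   - q' * (a ^+ 2 - (p * (v * b ^+ 2) + q * (a ^+ 2 + c ^+ 2)))
   + q * (c ^+ 2 - (p' * (v * b ^+ 2) + q' * (a ^+ 2 + c ^+ 2)))
   + 2%:R * q * u * (a * c - v * b ^+ 2).
  by rewrite /c; ring.
by rewrite D1 D2 D3; ring.
Qed.

Lemma dich (a b : A) : dvd2 a b \/ dvd2 b a.
Proof.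
have [u [v hab]] := G1 a b.
case: (EM (P v)) => Pv.
  by case: (caseV Pv hab); [right|left].
case: (EM (P u)) => Pu.
  have hba : b * a = v * b ^+ 2 + u * a ^+ 2 by rewrite mulrC hab addrC.
  by case: (caseV Pu hba); [left|right].
have [r0 [r1 [r2 E1]]] := @glin _ HG a b (v * b) (u * a) (a * (u * a)) (@Or42 _ _ _ _ erefl).
have [r0' [r1' [r2' E2]]] := @glin _ HG a b (v * b) (u * a) (b * (v * b)) (@Or43 _ _ _ _ erefl).
have ee : a * (u * a) + b * (v * b) = a * b by rewrite hab; ring.
pose X := r0 * v + r1 + r2 * u; pose X' := r0' * v + r1' + r2' * u.
have HX : u * a ^+ 2 = X * (a * b).
  by rewrite expr2 (mulrCA u) E1 ee /X; ring.
have HX' : v * b ^+ 2 = X' * (a * b).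
  by rewrite expr2 (mulrCA v) E2 ee /X'; ring.
case: (EM (P X)) => PX; last first.
  left; exists (X * v); split; first exact: nPM.
  exists (X' * u).
  have -> : X * v * b ^+ 2 = X * (v * b ^+ 2) by ring.
  by rewrite HX' mulrCA -HX; ring.
case: (EM (P X')) => PX'; last first.
  right; exists (X' * u); split; first exact: nPM.
  exists (X * v).
  have -> : X' * u * a ^+ 2 = X' * (u * a ^+ 2) by ring.
  by rewrite HX mulrCA -HX'; ring.
right; exists ((1 - (X + X')) * u); split.
  by apply: nPM => //; apply: P1B; apply: PD.
exists 0; rewrite mul0r.
have h0 : (1 - (X + X')) * (a * b) = 0.
  have -> : (1 - (X + X')) * (a * b) = a * b - (X * (a * b) + X' * (a * b)) by ring.
  by rewrite -HX -HX' -hab subrr.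
have -> : (1 - (X + X')) * u * a ^+ 2 = (1 - (X + X')) * (u * a ^+ 2) by ring.
by rewrite HX mulrCA h0 mulr0.
Qed.

Lemma dom (f : nat -> A) n : exists t, forall i, (i < n)%N -> dvd2 (f t) (f i).
Proof.
elim: n => [|n [t Ht]]; first by exists 0%N.
case: (dich (f t) (f n)) => h.
  by exists t => i; rewrite ltnS leq_eqVlt => /orP[/eqP ->|]; [exact: h|exact: Ht].
exists n => i; rewrite ltnS leq_eqVlt => /orP[/eqP ->|Hi]; first exact: dvd2_refl.
exact: dvd2_trans h (Ht i Hi).
Qed.

Lemma common (Q : nat -> A -> Prop) n : (forall i s r, Q i s -> Q i (r * s)) ->
  (forall i, (i < n)%N -> exists s, ~ P s /\ Q i s) ->
  exists s, ~ P s /\ forall i, (i < n)%N -> Q i s.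
Proof.
elim: n => [|n IH] HQ H; first by exists 1; split.
have [s [Ps Hs]] := IH HQ (fun i Hi => H i (ltn_trans Hi (ltnSn n))).
have [s' [Ps' Hs']] := H n (ltnSn n).
exists (s' * s); split; first exact: nPM.
move=> i; rewrite ltnS leq_eqVlt => /orP[/eqP ->|Hi].
  by rewrite mulrC; apply: HQ.
by apply: HQ; apply: Hs.
Qed.

Variable E : lmodType A.
Hypothesis HE2 : forall (a : A) (x : E),
  (exists e, x = a *: e) <-> (exists e, x = a ^+ 2 *: e).

Local Notation R := (triv_ext A E).
Definition inj (a : A) : R := (a, 0).

Lemma kill (x : A) (e : E) : x ^+ 2 = 0 -> x *: e = 0.
Proof.
move=> h; have [e' ->] : exists e', x *: e = x ^+ 2 *: e'.
  by apply/(HE2 x (x *: e)); exists e.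
by rewrite h scale0r.
Qed.

Lemma halfE (a : A) (e : E) : exists e', a *: e = a ^+ 2 *: e'.
Proof. by apply/(HE2 a (a *: e)); exists e. Qed.

Lemma injM (a : A) (x : R) : inj a * x = (a * x.1, a *: x.2).
Proof. by rewrite /inj; case: x => x1 x2 /=; rewrite /GRing.mul /= /te_mul /= scaler0 addr0. Qed.

Lemma pairR (x : R) : x = (x.1, x.2).
Proof. by case: x. Qed.

Lemma injMM (a b : A) : inj (a * b) = inj a * inj b.
Proof. by rewrite injM /= scaler0. Qed.

Lemma inj1 : inj 1 = 1.
Proof. by []. Qed.

Lemma inj0 : inj 0 = 0.
Proof. by []. Qed.

Lemma addpair (a c : A) (b d : E) : ((a, b) : R) + (c, d) = (a + c, b + d).
Proof. by []. Qed.

Lemma mulpair (a c : A) (b d : E) : ((a, b) : R) * (c, d) = (a * c, a *: d + c *: b).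
Proof. by []. Qed.

Lemma injD (a b : A) : inj (a + b) = inj a + inj b.
Proof. by rewrite /inj; congr pair; rewrite addr0. Qed.

Lemma decomp (F : {poly R}) : exists t s1 (F0 Z : {poly R}),
  [/\ ~ P s1, ~ P (F0`_t).1,
    (forall i, inj s1 * F`_i = inj (F`_t).1 * F0`_i + Z`_i),
    (forall i, (F`_t).1 * (Z`_i).1 = 0 /\ (Z`_i).1 ^+ 2 = 0) &
    (forall i, (F`_t).1 *: (Z`_i).2 = 0)].
Proof.
pose n := size F; pose f i := (F`_i).1.
have [t Ht] := dom f n.
pose ft := f t.
pose Q := fun i s => exists y c, s * f i = y * ft + c /\ ft * c = 0 /\ c ^+ 2 = 0.
have [s1 [Ps1 Hs1]] : exists s1, ~ P s1 /\ forall i, (i < n)%N -> Q i s1.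
  apply: common.
    move=> i s r [y [c [e1 [e2 e3]]]]; exists (r * y), (r * c); split.
      by rewrite -mulrA e1; ring.
    by split; [rewrite mulrCA e2 mulr0|rewrite exprMn e3 mulr0].
  move=> i Hi; have [s [y [c [Ps e1 e2 e3]]]] := PW (Ht i Hi).
  by exists s; split => //; exists y, c.
have [YC HYC] : {YC : nat -> A * A | forall i, (i < n)%N ->
   s1 * f i = (YC i).1 * ft + (YC i).2 /\ ft * (YC i).2 = 0 /\ (YC i).2 ^+ 2 = 0}.
  suff H : forall i, exists yc : A * A, (i < n)%N ->
     s1 * f i = yc.1 * ft + yc.2 /\ ft * yc.2 = 0 /\ yc.2 ^+ 2 = 0.
    by have [g Hg] := choice H; exists g.
  move=> i; case: (ltnP i n) => Hi; last by exists (0, 0) => Hi'; exfalso; move: Hi Hi'; lia.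
  by have [y [c H]] := Hs1 i Hi; exists (y, c).
have [Ep HEp] := @choice nat E (fun i e' => ft *: (F`_i).2 = ft ^+ 2 *: e') (fun i => halfE ft (F`_i).2).
pose y i := if i == t then s1 else if (i < n)%N then (YC i).1 else 0.
pose c i := if i == t then 0 else if (i < n)%N then (YC i).2 else 0.
pose B := (t.+1 + n)%N.
pose F0 := \poly_(i < B) ((y i, s1 *: Ep i) : R).
pose Z := \poly_(i < B) ((c i, s1 *: ((F`_i).2 - ft *: Ep i)) : R).
have fn : forall i, (n <= i)%N -> F`_i = 0 by move=> i Hi; rewrite nth_default.
exists t, s1, F0, Z; split => //.
- by rewrite /F0 coef_poly /B ltn_addr //= /y eqxx.
- move=> i; rewrite /F0 /Z !coef_poly; case: ifP => HiB; last first.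
    by rewrite fn ?mulr0 ?addr0 //; move: HiB; rewrite /B; apply: contraFT; rewrite -ltnNge => Hi; rewrite ltn_addl.
  rewrite [F`_i]pairR injM [inj _ * _]injM /= addpair.
  change (F`_t).1 with ft; change (F`_i).1 with (f i).
  congr pair; last first.
    by rewrite scalerBr !scalerA (mulrC ft s1) addrC subrK.
  rewrite /y /c; case: eqP => [->|ne]; first by rewrite addr0 mulrC.
  case: (ltnP i n) => Hi; last by rewrite /f fn // !mulr0 addr0.
  by have [-> _] := HYC i Hi; rewrite mulrC.
- move=> i; rewrite /Z coef_poly; case: ifP => _ /=; last by rewrite mulr0 expr0n.
  change (F`_t).1 with ft; rewrite /c; case: eqP => _; first by rewrite mulr0 expr0n.
  case: (ltnP i n) => Hi; last by rewrite mulr0 expr0n.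
  by have [_ [-> ->]] := HYC i Hi.
move=> i; rewrite /Z coef_poly; case: ifP => _ /=; last by rewrite scaler0.
change (F`_t).1 with ft.
by rewrite !scalerA mulrC -scalerA scalerBr HEp scalerA -expr2 subrr scaler0.
Qed.
Lemma ZG_elem (c : A) (z : E) (ft gt s3 w d y c' : A) (eta om : E) :
  ft * c = 0 -> c ^+ 2 = 0 -> ft *: z = 0 -> s3 * gt = w * ft + d -> ft * d = 0 ->
  d ^+ 2 = 0 -> c' ^+ 2 = 0 ->
  ((c, z) : R) * (inj s3 * (inj gt * ((y, eta) : R) + (c', om))) = 0.
Proof.
move=> hc hc2 hz hs3 hd hd2 hc'2.
rewrite [inj gt * _]injM /= addpair injM /= mulpair.
have -> : (0 : R) = (0, 0) by [].
have hcd := sq0 hc2 hd2; have hcc := sq0 hc2 hc'2.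
congr pair.
  have -> : c * (s3 * (gt * y + c')) = y * w * (ft * c) + y * (c * d) + s3 * (c * c') + y * c * (s3 * gt - (w * ft + d)) by ring.
  by rewrite hc hcd hcc hs3 subrr; ring.
have -> : s3 * (gt * y + c') = (y * w) * ft + y * d + s3 * c'.
  by rewrite mulrDr mulrA (mulrC s3 gt) -(mulrC s3) hs3; ring.
rewrite (kill _ hc2) !scalerDl -!scalerA hz (kill _ hd2) (kill _ hc'2) !scaler0.
by rewrite !addr0.
Qed.

Lemma half (F G : {poly R}) t s1 (F0 Z : {poly R}) t' s2 (G0 W : {poly R}) :
  ~ P s1 -> ~ P (F0`_t).1 ->
  (forall i, inj s1 * F`_i = inj (F`_t).1 * F0`_i + Z`_i) ->
  (forall i, (F`_t).1 * (Z`_i).1 = 0 /\ (Z`_i).1 ^+ 2 = 0) ->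
  (forall i, (F`_t).1 *: (Z`_i).2 = 0) ->
  ~ P s2 ->
  (forall j, inj s2 * G`_j = inj (G`_t').1 * G0`_j + W`_j) ->
  (forall j, (W`_j).1 ^+ 2 = 0) ->
  dvd2 (F`_t).1 (G`_t').1 ->
  forall i j, exists s, ~ P s /\ content (F * G) (inj s * (F`_i * G`_j)).
Proof.
move=> Ps1 PF0 HF HZ HZ2 Ps2 HGd HW Hd i j.
have [s3 [w [d [Ps3 e3 hd hd2]]]] := PW Hd.
pose sg := s2 * s3.
pose ft := (F`_t).1.
have ZG : forall a b, inj sg * (Z`_a * G`_b) = 0.
  move=> a b.
  have -> : inj sg * (Z`_a * G`_b) = Z`_a * (inj s3 * (inj s2 * G`_b)).
    by rewrite /sg injMM; ring.
  rewrite HGd [Z`_a]pairR [G0`_b]pairR [W`_b]pairR.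
  have [h1 h2] := HZ a.
  apply: (ZG_elem (w := w) (d := d)); [exact: h1|exact: h2|exact: HZ2|exact: e3|exact: hd|exact: hd2|exact: HW].
have E1 : forall a b, inj (sg * s1) * (F`_a * G`_b) = inj sg * (inj ft * (F0`_a * G`_b)).
  move=> a b.
  have -> : inj (sg * s1) * (F`_a * G`_b) = inj sg * ((inj s1 * F`_a) * G`_b).
    by rewrite injMM; ring.
  by rewrite HF mulrDl mulrDr ZG addr0 -mulrA.
have E2 : forall k, inj (sg * s1) * (F * G)`_k = inj sg * (inj ft * (F0 * G)`_k).
  by move=> k; rewrite !coefM !mulr_sumr; apply: eq_bigr => l _; rewrite E1.
pose N := fun x => exists s, ~ P s /\ content (F0 * G) (inj s * x).
have N0 : N 0 by exists 1; split => //; rewrite mulr0; exact: content0.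
have ND : forall x y, N x -> N y -> N (x + y).
  move=> x y [s [Ps Hx]] [s' [Ps' Hy]]; exists (s * s'); split; first exact: nPM.
  have -> : inj (s * s') * (x + y) = inj s' * (inj s * x) + inj s * (inj s' * y).
    by rewrite injMM; ring.
  by apply: contentD; apply: contentM.
have NM : forall x y, N y -> N (x * y).
  move=> x y [s [Ps Hy]]; exists s; split => //.
  have -> : inj s * (x * y) = x * (inj s * y) by ring.
  exact: contentM.
have Hreg : forall x, N (F0`_t * x) -> N x.
  move=> x [s [Ps Hx]]; exists (s * (F0`_t).1 ^+ 2); split.
    by apply: nPM => //; rewrite expr2; apply: nPM.
  have key : (((F0`_t).1, - (F0`_t).2) : R) * F0`_t = inj ((F0`_t).1 ^+ 2).
    by case: (F0`_t) => a e; rewrite mulpair scalerN addrN expr2.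
  have -> : inj (s * (F0`_t).1 ^+ 2) * x = (((F0`_t).1, - (F0`_t).2) : R) * (inj s * (F0`_t * x)).
    by rewrite injMM -key; ring.
  exact: contentM.
have Hall : forall k, N ((F0 * G)`_k).
  by move=> k; exists 1; split => //; rewrite inj1 mul1r; exact: content_coef.
have HN := @mccoy _ N N0 ND NM F0 t Hreg G Hall j.
have [s4 [Ps4 /contentP [r Hr]]] := HN.
exists (s4 * (sg * s1)); split.
  by apply: nPM => //; apply: nPM => //; apply: nPM.
have -> : inj (s4 * (sg * s1)) * (F`_i * G`_j) =
    \sum_(k < size (F0 * G)) (F0`_i * r k * inj (sg * s1)) * (F * G)`_k.
  rewrite injMM -mulrA E1.
  have -> : inj s4 * (inj sg * (inj ft * (F0`_i * G`_j))) = (inj sg * inj ft * F0`_i) * (inj s4 * G`_j).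
    by ring.
  rewrite Hr mulr_sumr; apply: eq_bigr => k _.
  have -> : F0`_i * r k * inj (sg * s1) * (F * G)`_k = F0`_i * r k * (inj (sg * s1) * (F * G)`_k).
    by ring.
  by rewrite E2; ring.
exact: (@content_sum _ (F * G) (size (F0 * G)) (fun k => F0`_i * r k * inj (sg * s1))).
Qed.

Lemma local_claim (F G : {poly R}) i j :
  exists s, ~ P s /\ content (F * G) (inj s * (F`_i * G`_j)).
Proof.
have [t [s1 [F0 [Z [Ps1 PF0 HF HZ HZ2]]]]] := decomp F.
have [t' [s2 [G0 [W [Ps2 PG0 HGd HW HW2]]]]] := decomp G.
case: (dich (F`_t).1 (G`_t').1) => Hd.
  by apply: (half Ps1 PF0 HF HZ HZ2 Ps2 HGd _ Hd) => k; case: (HW k).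
have [s [Ps H]] := half Ps2 PG0 HGd HW HW2 Ps1 HF (fun k => proj2 (HZ k)) Hd j i.
by exists s; split => //; rewrite (mulrC F G) (mulrC F`_i G`_j).
Qed.

End Local.
Unset Implicit Arguments.

Theorem corollary2p2 (A : comNzRingType) (E : lmodType A)
  (HE : exists e : E, e != 0) :
  gaussian (triv_ext A E) <->
  (gaussian A /\
   forall a : A, forall x : E,
     (exists e : E, x = a *: e) <-> (exists e : E, x = a ^+ 2 *: e)).
Proof.
split; last first.
  case=> HG HE2 F G; apply: gauss_of_coef => i j.
  pose L := fun s => content (F * G) (inj E s * (F`_i * G`_j)).
  suff : L 1 by rewrite /L inj1 mul1r.
  apply: local_global.
    split.
    - by rewrite /L inj0 mul0r; exact: content0.
    - by move=> x y Hx Hy; rewrite /L injD mulrDl; apply: contentD.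
    - by move=> x y Hy; rewrite /L injMM -mulrA; apply: contentM.
  move=> P PD PM P1 Pp.
  exact: (local_claim PD PM P1 Pp HG HE2 F G i j).
move=> HR; split.
  move=> f g; apply: gauss_of_coef => i j.
  pose lift (p : {poly A}) := \poly_(k < size p) inj E p`_k.
  have cl : forall p k, (lift p)`_k = inj E p`_k.
    move=> p k; rewrite coef_poly; case: ifP => // H.
    by rewrite nth_default ?inj0 // leqNgt H.
  have injS : forall n (h : 'I_n -> A), inj E (\sum_(l < n) h l) = \sum_(l < n) inj E (h l).
    move=> n h; apply: (big_ind2 (fun a b => inj E a = b)) => //.
    by move=> ? ? ? ? <- <-; rewrite injD.
  have fstS : forall n (h : 'I_n -> triv_ext A E), (\sum_(l < n) h l).1 = \sum_(l < n) (h l).1.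
    move=> n h; apply: (big_ind2 (fun a b => a.1 = b)) => //.
    by move=> ? ? ? ? <- <-.
  have cM : forall k, (lift f * lift g)`_k = inj E ((f * g)`_k).
    move=> k; rewrite !coefM injS; apply: eq_bigr => l _.
    by rewrite !cl injMM.
  have Hm : ideal_mul (content (lift f)) (content (lift g)) ((lift f)`_i * (lift g)`_j).
    by apply: im_prod; apply: content_coef.
  have /contentP [r Hr] := (proj2 (HR (lift f) (lift g) _) Hm).
  have := congr1 fst Hr; rewrite !cl -injMM /= fstS => ->.
  have -> : \sum_(l < size (lift f * lift g)) (r l * (lift f * lift g)`_l).1 =
            \sum_(l < size (lift f * lift g)) (r l).1 * (f * g)`_l.
    by apply: eq_bigr => l _; rewrite cM.
  exact: (@content_sum _ (f * g) (size (lift f * lift g)) (fun l => (r l).1)).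
move=> a x; split; last first.
  by case=> e ->; exists (a *: e); rewrite scalerA expr2.
case=> e ->.
pose c0 := inj E a; pose c1 : triv_ext A E := (0, e).
pose F := c0%:P + c1%:P * 'X; pose G := c0%:P - c1%:P * 'X.
have c11 : c1 * c1 = 0 by rewrite /c1 mulpair !scale0r mul0r addr0.
have FG : F * G = (c0 * c0)%:P.
  have -> : F * G = (c0 * c0)%:P - (c1 * c1)%:P * 'X^2 by rewrite /F /G !polyCM; ring.
  by rewrite c11 mul0r subr0.
have Hm : ideal_mul (content F) (content G) (F`_1 * G`_0) by apply: im_prod; apply: content_coef.
have F1 : F`_1 = c1 by rewrite /F coefD coefC coefCM coefX /= add0r mulr1.
have G0 : G`_0 = c0 by rewrite /G coefB coefC coefCM coefX /= mulr0 subr0.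
have := proj2 (HR F G _) Hm; rewrite FG F1 G0 => /contentP [r Hr].
have : c1 * c0 = r 0%N * (c0 * c0).
  rewrite Hr (@sum_cut _ (fun l => r l * (c0 * c0)%:P`_l) 1); last first.
  - by move=> l Hl; rewrite nth_default // mulr0.
  - by move=> l; case: l => // l _; rewrite coefC /= mulr0.
  by rewrite big_ord1 coefC.
move=> /(congr1 snd); rewrite /c0 /c1 -injMM mulrC injM [r 0%N * _]mulrC injM /=.
by move=> ->; exists (r 0%N).2; rewrite expr2.
Qed.
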